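(* Let $(A,\circ)$ be a Novikov algebra, $\{a,b\}=a\circ b+b\circ a$ and $[a,b]=a\circ b-b\circ a$. Then for all $a,b,c,d\in A$, $$\{[c,a],[b,d]\}=\{d\circ c,a\circ b\}+\{c\circ d,b\circ a\}-\{b\circ c,a\circ d\}-\{c\circ b,d\circ a\}.$$
   Context: A (right) Novikov algebra is an algebra $(A,\circ)$ satisfying $a\circ(b\circ c)-(a\circ b)\circ c=a\circ(c\circ b)-(a\circ c)\circ b$ and $a\circ(b\circ c)=b\circ(a\circ c)$ for all $a,b,c$. *)

(* Defs.v *)
From mathcomp Require Import all_boot all_algebra.
Set Implicit Arguments. Unset Strict Implicit. Unset Printing Implicit Defensive.
Import GRing.Theory.
Local Open Scope ring_scope.

Definition bilinear_prod (R : comNzRingType) (A : lmodType R) (mul : A -> A -> A) : Prop :=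
  (forall (k : R) (a b c : A), mul (k *: a + b) c = k *: mul a c + mul b c) /\
  (forall (k : R) (a b c : A), mul a (k *: b + c) = k *: mul a b + mul a c).

Definition is_novikov (R : comNzRingType) (A : lmodType R) (mul : A -> A -> A) : Prop :=
  (forall a b c : A,
     mul a (mul b c) - mul (mul a b) c = mul a (mul c b) - mul (mul a c) b) /\
  (forall a b c : A, mul a (mul b c) = mul b (mul a c)).

Definition anticomm (R : comNzRingType) (A : lmodType R) (mul : A -> A -> A) (a b : A) : A :=
  mul a b + mul b a.
Definition comm (R : comNzRingType) (A : lmodType R) (mul : A -> A -> A) (a b : A) : A :=
  mul a b - mul b a.

(* Main.v *)
Require Import Defs.
From mathcomp Require Import all_boot all_algebra.
Import GRing.Theory.
Local Open Scope ring_scope.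

Ltac bring y :=
  repeat match goal with
  | |- context [@Algebra.add ?V ?u_ (@Algebra.add ?V2 y ?r)] =>
      tryif unify u_ y then fail else rewrite [@Algebra.add V u_ (@Algebra.add V2 y r)]addrCA
  end.

Ltac bringN y :=
  repeat match goal with
  | |- context [@Algebra.add ?V ?u_ (@Algebra.add ?V2 (@Algebra.opp ?W y) ?r)] =>
      tryif unify u_ (@Algebra.opp W y) then fail
      else rewrite [@Algebra.add V u_ (@Algebra.add V2 (@Algebra.opp W y) r)]addrCA
  end.

Ltac canc :=
  repeat match goal with
  | |- @Algebra.add _ (@Algebra.opp _ ?z) _ = _ => bring z; bringN z; rewrite addKr
  | |- @Algebra.add _ ?x _ = _ => bringN x; bring x; rewrite addNKr
  end.

Lemma fin_aux2 (R : comNzRingType) (A : lmodType R) (x : A) : x + 0 = 0 -> x = 0.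
Proof. by rewrite addr0. Qed.

Lemma fin_aux (R : comNzRingType) (A : lmodType R) (x s : A) : s = 0 -> x - s = 0 -> x = 0.
Proof. by move=> ->; rewrite subr0. Qed.

Theorem mainTheorem12 (R : comNzRingType) (A : lmodType R) (mul : A -> A -> A)
  (Hbil : bilinear_prod mul) (Hnov : is_novikov mul) (a b c d : A) :
  anticomm mul (comm mul c a) (comm mul b d) =
    anticomm mul (mul d c) (mul a b) + anticomm mul (mul c d) (mul b a)
    - anticomm mul (mul b c) (mul a d) - anticomm mul (mul c b) (mul d a).
Proof.
  have mulDl x y z : mul (x + y) z = mul x z + mul y z.
    by have := (proj1 Hbil) 1 x y z; rewrite !scale1r.
  have mulDr x y z : mul x (y + z) = mul x y + mul x z.
    by have := (proj2 Hbil) 1 x y z; rewrite !scale1r.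
  have mul0l z : mul 0 z = 0.
    by apply/(addrI (mul 0 z)); rewrite -mulDl !addr0.
  have mul0r z : mul z 0 = 0.
    by apply/(addrI (mul z 0)); rewrite -mulDr !addr0.
  have mulNl x z : mul (- x) z = - mul x z.
    by have := (proj1 Hbil) (-1) x 0 z; rewrite !addr0 mul0l addr0 !scaleN1r.
  have mulNr x z : mul z (- x) = - mul z x.
    by have := (proj2 Hbil) (-1) z x 0; rewrite !addr0 mul0r addr0 !scaleN1r.
  have z0 : ((mul a (mul (mul d c) b)) - (mul (mul d c) (mul a b))) = 0 by rewrite (proj2 Hnov a (mul d c) b) subrr.
  have z1 : ((mul a (mul b (mul d c)) - mul (mul a b) (mul d c)) - (mul a (mul (mul d c) b) - mul (mul a (mul d c)) b)) = 0 by rewrite (proj1 Hnov a b (mul d c)) subrr.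
  have z2 : ((mul b (mul (mul c d) a)) - (mul (mul c d) (mul b a))) = 0 by rewrite (proj2 Hnov b (mul c d) a) subrr.
  have z3 : ((mul b (mul a (mul c d)) - mul (mul b a) (mul c d)) - (mul b (mul (mul c d) a) - mul (mul b (mul c d)) a)) = 0 by rewrite (proj1 Hnov b a (mul c d)) subrr.
  have z4 : ((mul (mul a (mul d c)) b) - (mul (mul d (mul a c)) b)) = 0 by rewrite (proj2 Hnov a d c) subrr.
  have z5 : ((mul a (mul b (mul d c))) - (mul b (mul a (mul d c)))) = 0 by rewrite (proj2 Hnov a b (mul d c)) subrr.
  have z6 : ((mul a (mul b (mul c d))) - (mul b (mul a (mul c d)))) = 0 by rewrite (proj2 Hnov a b (mul c d)) subrr.
  have z7 : ((mul b (mul a (mul d c))) - (mul b (mul d (mul a c)))) = 0 by rewrite (proj2 Hnov a d c) subrr.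
  have z8 : ((mul b (mul a (mul c d) - mul (mul a c) d)) - (mul b (mul a (mul d c) - mul (mul a d) c))) = 0 by rewrite (proj1 Hnov a c d) subrr.
  have z9 : ((mul (mul a d) (mul b c)) - (mul b (mul (mul a d) c))) = 0 by rewrite (proj2 Hnov (mul a d) b c) subrr.
  have z10 : ((mul b (mul d (mul a c))) - (mul d (mul b (mul a c)))) = 0 by rewrite (proj2 Hnov b d (mul a c)) subrr.
  have z11 : ((mul (mul a c) (mul b d)) - (mul b (mul (mul a c) d))) = 0 by rewrite (proj2 Hnov (mul a c) b d) subrr.
  have z12 : ((mul d (mul (mul a c) b) - mul (mul d (mul a c)) b) - (mul d (mul b (mul a c)) - mul (mul d b) (mul a c))) = 0 by rewrite (proj1 Hnov d (mul a c) b) subrr.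
  have z13 : ((mul (mul a c) (mul d b)) - (mul d (mul (mul a c) b))) = 0 by rewrite (proj2 Hnov (mul a c) d b) subrr.
  have z14 : ((mul a (mul c (mul d b))) - (mul a (mul d (mul c b)))) = 0 by rewrite (proj2 Hnov c d b) subrr.
  have z15 : ((mul (mul c b) (mul d a)) - (mul d (mul (mul c b) a))) = 0 by rewrite (proj2 Hnov (mul c b) d a) subrr.
  have z16 : ((mul d (mul a (mul c b)) - mul (mul d a) (mul c b)) - (mul d (mul (mul c b) a) - mul (mul d (mul c b)) a)) = 0 by rewrite (proj1 Hnov d a (mul c b)) subrr.
  have z17 : ((mul a (mul d (mul c b))) - (mul d (mul a (mul c b)))) = 0 by rewrite (proj2 Hnov a d (mul c b)) subrr.
  have z18 : ((mul (mul d b) (mul c a)) - (mul c (mul (mul d b) a))) = 0 by rewrite (proj2 Hnov (mul d b) c a) subrr.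
  have z19 : ((mul c (mul a (mul d b)) - mul (mul c a) (mul d b)) - (mul c (mul (mul d b) a) - mul (mul c (mul d b)) a)) = 0 by rewrite (proj1 Hnov c a (mul d b)) subrr.
  have z20 : ((mul a (mul c (mul d b))) - (mul c (mul a (mul d b)))) = 0 by rewrite (proj2 Hnov a c (mul d b)) subrr.
  have z21 : ((mul a (mul b (mul c d))) - (mul a (mul c (mul b d)))) = 0 by rewrite (proj2 Hnov b c d) subrr.
  have z22 : ((mul (mul b d) (mul c a)) - (mul c (mul (mul b d) a))) = 0 by rewrite (proj2 Hnov (mul b d) c a) subrr.
  have z23 : ((mul c (mul a (mul b d)) - mul (mul c a) (mul b d)) - (mul c (mul (mul b d) a) - mul (mul c (mul b d)) a)) = 0 by rewrite (proj1 Hnov c a (mul b d)) subrr.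
  have z24 : ((mul a (mul c (mul b d))) - (mul c (mul a (mul b d)))) = 0 by rewrite (proj2 Hnov a c (mul b d)) subrr.
  have z25 : ((mul a (mul b (mul c d) - mul (mul b c) d)) - (mul a (mul b (mul d c) - mul (mul b d) c))) = 0 by rewrite (proj1 Hnov b c d) subrr.
  have z26 : ((mul a (mul (mul b c) d)) - (mul (mul b c) (mul a d))) = 0 by rewrite (proj2 Hnov a (mul b c) d) subrr.
  have z27 : ((mul a (mul (mul b d) c)) - (mul (mul b d) (mul a c))) = 0 by rewrite (proj2 Hnov a (mul b d) c) subrr.
  have z28 : ((mul (mul c (mul d b)) a) - (mul (mul d (mul c b)) a)) = 0 by rewrite (proj2 Hnov c d b) subrr.
  have z29 : ((mul (mul b (mul c d)) a) - (mul (mul c (mul b d)) a)) = 0 by rewrite (proj2 Hnov b c d) subrr.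
  have Z : ((mul a (mul (mul d c) b)) - (mul (mul d c) (mul a b))) + ((mul a (mul b (mul d c)) - mul (mul a b) (mul d c)) - (mul a (mul (mul d c) b) - mul (mul a (mul d c)) b)) + ((mul b (mul (mul c d) a)) - (mul (mul c d) (mul b a))) + ((mul b (mul a (mul c d)) - mul (mul b a) (mul c d)) - (mul b (mul (mul c d) a) - mul (mul b (mul c d)) a)) + (- ((mul (mul a (mul d c)) b) - (mul (mul d (mul a c)) b))) + (- (((mul a (mul b (mul d c))) - (mul b (mul a (mul d c)))) + ((mul a (mul b (mul d c))) - (mul b (mul a (mul d c)))))) + (((mul a (mul b (mul c d))) - (mul b (mul a (mul c d)))) + ((mul a (mul b (mul c d))) - (mul b (mul a (mul c d))))) + (- ((mul b (mul a (mul d c))) - (mul b (mul d (mul a c))))) + ((mul b (mul a (mul c d) - mul (mul a c) d)) - (mul b (mul a (mul d c) - mul (mul a d) c))) + ((mul (mul a d) (mul b c)) - (mul b (mul (mul a d) c))) + (- ((mul b (mul d (mul a c))) - (mul d (mul b (mul a c))))) + (- ((mul (mul a c) (mul b d)) - (mul b (mul (mul a c) d)))) + ((mul d (mul (mul a c) b) - mul (mul d (mul a c)) b) - (mul d (mul b (mul a c)) - mul (mul d b) (mul a c))) + ((mul (mul a c) (mul d b)) - (mul d (mul (mul a c) b))) + (- ((mul a (mul c (mul d b))) - (mul a (mul d (mul c b))))) + ((mul (mul c b) (mul d a)) - (mul d (mul (mul c b) a))) + (- ((mul d (mul a (mul c b)) - mul (mul d a) (mul c b)) - (mul d (mul (mul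 c b) a) - mul (mul d (mul c b)) a))) + (- ((mul a (mul d (mul c b))) - (mul d (mul a (mul c b))))) + (- ((mul (mul d b) (mul c a)) - (mul c (mul (mul d b) a)))) + ((mul c (mul a (mul d b)) - mul (mul c a) (mul d b)) - (mul c (mul (mul d b) a) - mul (mul c (mul d b)) a)) + ((mul a (mul c (mul d b))) - (mul c (mul a (mul d b)))) + (- ((mul a (mul b (mul c d))) - (mul a (mul c (mul b d))))) + ((mul (mul b d) (mul c a)) - (mul c (mul (mul b d) a))) + (- ((mul c (mul a (mul b d)) - mul (mul c a) (mul b d)) - (mul c (mul (mul b d) a) - mul (mul c (mul b d)) a))) + (- ((mul a (mul c (mul b d))) - (mul c (mul a (mul b d))))) + (- ((mul a (mul b (mul c d) - mul (mul b c) d)) - (mul a (mul b (mul d c) - mul (mul b d) c)))) + (- ((mul a (mul (mul b c) d)) - (mul (mul b c) (mul a d)))) + ((mul a (mul (mul b d) c)) - (mul (mul b d) (mul a c))) + (- ((mul (mul c (mul d b)) a) - (mul (mul d (mul c b)) a))) + (- ((mul (mul b (mul c d)) a) - (mul (mul c (mul b d)) a))) = 0.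
    by rewrite ?z0 ?z1 ?z2 ?z3 ?z4 ?z5 ?z6 ?z7 ?z8 ?z9 ?z10 ?z11 ?z12 ?z13 ?z14 ?z15 ?z16 ?z17 ?z18 ?z19 ?z20 ?z21 ?z22 ?z23 ?z24 ?z25 ?z26 ?z27 ?z28 ?z29 !oppr0 !addr0 subrr.
  apply/eqP; rewrite -subr_eq0; apply/eqP.
  apply: (@fin_aux _ _ _ _ Z).
  rewrite /anticomm /comm.
  rewrite !(mulDl, mulDr, mulNl, mulNr) !(opprD, opprK) -!addrA.
  apply: (@fin_aux2 _ _ _); rewrite -!addrA.
  canc; reflexivity.
Qed.
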